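(* Let $d\ge2$ and fix $p_0<p_c(d)$. Let $a_n=n(e_1+\dots+e_d)\in\mathbb Z^d$ and suppose the edge weights $\tau_e$ are i.i.d. Bernoulli with values in $\{0,1\}$, $\mathbb P(\tau_e=0)=p$ and $p<p_0$. There exist a constant $C=C(d,p_0)>0$ and an index $N=N(d,p)\in\mathbb N$ such that for all $n\ge N$, $$C\,n\,p^{1/d}\ \le\ \mathbb E\big[\#\{e\in\pi^{(a_n)}:\tau_e=0\}\big].$$ Furthermore, there exists an index $N'=N'(d,p)$ such that for $n\ge N'$, $$C\,p^{1/d}\ \le\ \mathbb E\big[\nu_{a_n}(\{0\})\big].$$
   Context: $p_c(d)$ is the critical probability for Bernoulli bond percolation on $\mathbb Z^d$; $e_1,\dots,e_d$ are the standard basis vectors. Weights $\tau_e$ are attached to nearest-neighbor edges of $\mathbb Z^d$. $T(\gamma)=\sum_{e\in\gamma}\tau_e$; a geodesic from $0$ to $x$ is a vertex self-avoiding nearest-neighbor path minimizing $T$ among such paths. Fix a deterministic ordering of all finite vertex self-avoiding paths; $\pi^{(x)}$ is the first geodesic from $0$ to $x$ in this ordering. $\nu_x(B)=\frac{1}{|\pi^{(x)}|}\#\{e\in\pi^{(x)}:\tau_e\in B\}$, with $|\pi^{(x)}|$ the number of edges. *)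

(* Defs.v *)
From HB Require Import structures.
From mathcomp Require Import all_boot all_order all_algebra.
From mathcomp Require Import all_classical all_reals all_analysis.
Set Implicit Arguments. Unset Strict Implicit. Unset Printing Implicit Defensive.
Import Order.TTheory GRing.Theory Num.Theory.
Local Open Scope classical_set_scope.
Local Open Scope ring_scope.

Definition vtx (d : nat) := {ffun 'I_d -> int}.
Definition origin (d : nat) : vtx d := [ffun => 0%Z].
Definition shift (d : nat) (x : vtx d) (i : 'I_d) : vtx d :=
  [ffun j => x j + (j == i)%:Z].
Definition diag (d : nat) (n : nat) : vtx d := [ffun => n%:Z].

(* Nearest-neighbour edges of Z^d: the pair (x, i) denotes the edge {x, x + e_i}.
   This is a bijection with the set of nearest-neighbour edges. *)
Definition edge (d : nat) := (vtx d * 'I_d)%type.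

Definition adj (d : nat) : rel (vtx d) :=
  fun u v => [exists i, (v == shift u i) || (u == shift v i)].

Definition pair_edges (d : nat) (u v : vtx d) : seq (edge d) :=
  [seq (u, i) | i <- enum 'I_d & v == shift u i] ++
  [seq (v, i) | i <- enum 'I_d & u == shift v i].

Definition edges_of (d : nat) (g : seq (vtx d)) : seq (edge d) :=
  flatten [seq pair_edges uv.1 uv.2 | uv <- zip g (behead g)].

Definition sap (d : nat) (x y : vtx d) (g : seq (vtx d)) : Prop :=
  match g with
  | [::] => False
  | v :: s => [/\ v = x, path (@adj d) x s, last x s = y & uniq g]
  end.

Section FPP.
Variables (d : nat) (Omega : Type) (R : realType).
Variable tau : edge d -> Omega -> R.

Definition passage_time (w : Omega) (g : seq (vtx d)) : R :=
  \sum_(e <- edges_of g) tau e w.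

Definition geodesic (w : Omega) (x : vtx d) (g : seq (vtx d)) : Prop :=
  sap (origin d) x g /\
  forall g', sap (origin d) x g' -> passage_time w g <= passage_time w g'.

(* The ordering of finite paths is given by an injective rank function. *)
Variable rank : seq (vtx d) -> nat.

Definition first_geodesic (w : Omega) (x : vtx d) (g : seq (vtx d)) : Prop :=
  geodesic w x g /\ forall g', geodesic w x g' -> (rank g <= rank g')%N.

Definition pi_geo (w : Omega) (x : vtx d) : seq (vtx d) :=
  xget [::] (first_geodesic w x).

Definition nzero (w : Omega) (x : vtx d) : nat :=
  count (fun e => tau e w == 0) (edges_of (pi_geo w x)).

Definition glen (w : Omega) (x : vtx d) : nat := size (edges_of (pi_geo w x)).

Definition nu0 (w : Omega) (x : vtx d) : R := (nzero w x)%:R / (glen w x)%:R.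
End FPP.

Definition mutually_independent (d0 : measure_display) (Omega : measurableType d0)
  (R : realType) (P : probability Omega R) (I : eqType) (X : I -> Omega -> R) : Prop :=
  forall (s : seq I) (B : I -> set R), uniq s -> (forall i, measurable (B i)) ->
  P (\bigcap_(i in [set` s]) (X i @^-1` B i)) = (\prod_(i <- s) P (X i @^-1` B i))%E.

Definition iid_bernoulli (d0 : measure_display) (Omega : measurableType d0)
  (R : realType) (P : probability Omega R) (I : eqType) (X : I -> Omega -> R)
  (p : R) : Prop :=
  [/\ forall i, measurable_fun setT (X i),
      mutually_independent P X &
      forall i, P (X i @^-1` [set 0]) = p%:E /\ P (X i @^-1` [set 1]) = (1 - p)%:E].

(* Bernoulli bond percolation: edge e is open iff X e w = 1 (probability q). *)
Definition open_cluster (d : nat) (Omega : Type) (R : realType)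
  (X : edge d -> Omega -> R) (w : Omega) : set (vtx d) :=
  [set x | exists s, [/\ path (@adj d) (origin d) s, last (origin d) s = x &
                        all (fun e => X e w == 1) (edges_of (origin d :: s))]].

Definition no_percolation (R : realType) (d : nat) (q : R) : Prop :=
  forall (d0 : measure_display) (Omega : measurableType d0)
         (P : probability Omega R) (X : edge d -> Omega -> R),
  iid_bernoulli P X (1 - q) ->
  P [set w | ~ finite_set (open_cluster X w)] = 0%E.

Definition p_c (R : realType) (d : nat) : R :=
  sup [set q : R | 0 <= q <= 1 /\ no_percolation d q].

(* Main.v *)
Require Import Defs.
From HB Require Import structures.
From mathcomp Require Import all_boot all_order all_algebra.
From mathcomp Require Import all_classical all_reals all_analysis.
From mathcomp Require Import measurable_realfun.
From mathcomp Require Import zify ring lra.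
Import Order.TTheory GRing.Theory Num.Theory.
Local Open Scope classical_set_scope.
Local Open Scope ring_scope.
Set Implicit Arguments. Unset Strict Implicit. Unset Printing Implicit Defensive.

Local Notation sh := Defs.shift.
Section Comb.
Variable d : nat.
Implicit Types (x y u v : vtx d) (s : seq 'I_d).

Definition vsum x : int := \sum_(j < d) x j.

Lemma vsum_shift x i : vsum (sh x i) = vsum x + 1.
Proof.
rewrite /vsum.
under eq_bigr do rewrite ffunE.
rewrite big_split /=; congr (_ + _).
rewrite (bigD1 i) //= eqxx big1 ?addr0 //.
by move=> j /negbTE ->.
Qed.

Lemma shift_inj x i j : (sh x i == sh x j) = (i == j).
Proof.
apply/eqP/eqP => [/ffunP/(_ i)|->//].
rewrite !ffunE eqxx => /addrI.
by case: eqP.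
Qed.

Lemma shift_neq x i : (x == sh x i) = false.
Proof.
apply/negbTE/eqP => /(congr1 vsum); rewrite vsum_shift; lia.
Qed.

Lemma shift2_neq x i j : (x == sh (sh x i) j) = false.
Proof.
apply/negbTE/eqP => /(congr1 vsum); rewrite !vsum_shift; lia.
Qed.

Lemma adj_vsum u v : adj u v -> vsum v <= vsum u + 1.
Proof.
case/existsP => i /orP [/eqP -> | /eqP ->]; rewrite vsum_shift; lia.
Qed.

Lemma edges_cons2 x y (g : seq (vtx d)) : edges_of (x :: y :: g) = pair_edges x y ++ edges_of (y :: g).
Proof. by []. Qed.

Lemma pair_edges_shift x i : pair_edges x (sh x i) = [:: (x, i)].
Proof.
rewrite /pair_edges.
have -> : [seq j <- enum 'I_d | sh x i == sh x j] = [:: i].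
  rewrite (eq_filter (a2 := pred1 i)); last by move=> j; rewrite shift_inj eq_sym.
  by rewrite filter_pred1_uniq ?enum_uniq ?mem_enum.
have -> : [seq j <- enum 'I_d | x == sh (sh x i) j] = [::].
  by apply/eqP; rewrite -(negbK (_ == _)) -has_filter; apply/hasPn => j _; rewrite shift2_neq.
by [].
Qed.

Lemma size_pair_edges u v : adj u v -> size (pair_edges u v) = 1%N.
Proof.
case/existsP => i /orP [/eqP -> | /eqP ->]; first by rewrite pair_edges_shift.
rewrite /pair_edges size_cat !size_map.
have -> : [seq j <- enum 'I_d | v == sh (sh v i) j] = [::].
  apply/eqP; rewrite -(negbK (_ == _)) -has_filter; apply/hasPn => j _.
  by rewrite shift2_neq.
have -> : [seq j <- enum 'I_d | sh v i == sh v j] = [:: i].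
  rewrite (eq_filter (a2 := pred1 i)); last by move=> j; rewrite shift_inj eq_sym.
  by rewrite filter_pred1_uniq ?enum_uniq ?mem_enum.
by [].
Qed.

Lemma size_edges_path x (g : seq (vtx d)) : path (@adj d) x g -> size (edges_of (x :: g)) = size g.
Proof.
elim: g x => [//|y g IH] x /= /andP [axy pg].
by rewrite edges_cons2 size_cat size_pair_edges // IH.
Qed.

Lemma vsum_path x (g : seq (vtx d)) : path (@adj d) x g -> vsum (last x g) <= vsum x + (size g)%:Z.
Proof.
elim: g x => [|y g IH] x /=; first by rewrite addr0.
move=> /andP [axy pg]; have := IH _ pg; have := adj_vsum axy; lia.
Qed.


Fixpoint walk x s : seq (vtx d) :=
  if s is i :: s' then sh x i :: walk (sh x i) s' else [::].
Fixpoint wedges x s : seq (edge d) :=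
  if s is i :: s' then (x, i) :: wedges (sh x i) s' else [::].
Definition endp x s := last x (walk x s).

Lemma endpE x s : endp x s = [ffun j => x j + (count_mem j s)%:Z].
Proof.
rewrite /endp; elim: s x => [|i s IH] x /=.
  by apply/ffunP => j; rewrite ffunE addr0.
rewrite IH; apply/ffunP => j; rewrite !ffunE -addrA; congr (_ + _).
by rewrite eq_sym PoszD addrC.
Qed.

Lemma endp_cat x s1 s2 : endp x (s1 ++ s2) = endp (endp x s1) s2.
Proof.
rewrite !endpE; apply/ffunP => j; rewrite !ffunE count_cat PoszD addrA.
done.
Qed.

Lemma wedges_cat x s1 s2 : wedges x (s1 ++ s2) = wedges x s1 ++ wedges (endp x s1) s2.
Proof. by elim: s1 x => [|i s1 IH] x //=; rewrite IH. Qed.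

Lemma edges_walk x s : edges_of (x :: walk x s) = wedges x s.
Proof.
elim: s x => [//|i s IH] x /=.
by rewrite edges_cons2 pair_edges_shift IH.
Qed.

Lemma size_wedges x s : size (wedges x s) = size s.
Proof. by elim: s x => [//|i s IH] x /=; rewrite IH. Qed.

Lemma walk_path x s : path (@adj d) x (walk x s).
Proof.
elim: s x => [//|i s IH] x /=; rewrite IH andbT.
by apply/existsP; exists i; rewrite eqxx.
Qed.

Lemma vsum_walk x s : forall y, y \in walk x s -> vsum x < vsum y.
Proof.
elim: s x => [//|i s IH] x y /=; rewrite inE => /orP [/eqP ->|/IH].
  by rewrite vsum_shift ltrDl.
by rewrite vsum_shift; lia.
Qed.

Lemma walk_uniq x s : uniq (x :: walk x s).
Proof.
elim: s x => [//|i s IH] x; rewrite [walk _ _]/= cons_uniq IH andbT inE negb_or.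
apply/andP; split; first by rewrite shift_neq.
by apply/negP => /vsum_walk; rewrite vsum_shift; lia.
Qed.

Lemma vsum_endp x s : vsum (endp x s) = vsum x + (size s)%:Z.
Proof.
rewrite /endp; elim: s x => [|i s IH] x /=; first by rewrite addr0.
by rewrite IH vsum_shift; lia.
Qed.

End Comb.

Section Word.
Variable d : nat.

Definition lin (f : 'I_d -> nat) : seq 'I_d := flatten [seq nseq (f j) j | j <- enum 'I_d].

Lemma count_lin f j : count_mem j (lin f) = f j.
Proof.
rewrite /lin count_flatten -map_comp.
rewrite (eq_map (g := fun j' => ((j' == j) * f j')%N)); last first.
  by move=> j' /=; rewrite count_nseq /= mulnC eq_sym.
rewrite sumnE big_map big_enum (bigD1 j) //= eqxx mul1n big1 ?addn0 //.
by move=> j' /negbTE ->.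
Qed.

Variable k : nat.
Definition Yt := ({ffun 'I_d -> 'I_k} * 'I_d)%type.

Definition bword (o : option Yt) : seq 'I_d :=
  match o with
  | Some yi => lin (fun j => yi.1 j) ++ yi.2 :: lin (fun j => (k - yi.1 j - (j == yi.2))%N)
  | None => lin (fun _ => k)
  end.

Lemma count_bword o j : count_mem j (bword o) = k.
Proof.
case: o => [[y i]|] /=; last by rewrite count_lin.
rewrite count_cat /= !count_lin.
have := ltn_ord (y j); case: (boolP (j == i)) => [/eqP ->|ne]; first by rewrite eqxx /=; lia.
rewrite eq_sym (negbTE ne) /=; lia.
Qed.

Definition ebox (b : nat) (yi : Yt) : edge d := ([ffun j => ((b * k + yi.1 j)%N)%:Z], yi.2).

Lemma ebox_inj b : injective (ebox b).
Proof.
move=> [y i] [y' i'] [/ffunP E ->]; congr (_, _); apply/ffunP => j.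
have := E j; rewrite !ffunE => -[] /eqP; rewrite eqn_add2l => /eqP; exact: val_inj.
Qed.

Definition cst (m : nat) : vtx d := [ffun => (m%:Z)].

Lemma box_edge_in b yi :
  ebox b yi \in wedges (cst (b * k)) (bword (Some yi)).
Proof.
rewrite /bword wedges_cat mem_cat; apply/orP; right.
rewrite /= inE; apply/orP; left; apply/eqP; congr (_, _).
rewrite endpE; apply/ffunP => j; rewrite !ffunE count_lin.
by rewrite PoszD.
Qed.

End Word.

Section Path.
Variables (d k : nat) (ch : nat -> option (Yt d k)).

Definition Fw m := flatten [seq bword (ch b) | b <- iota 0 m].

Lemma Fw_S m : Fw m.+1 = Fw m ++ bword (ch m).
Proof. by rewrite /Fw -addn1 iotaD map_cat flatten_cat /= cats0. Qed.

Lemma count_Fw m j : count_mem j (Fw m) = (m * k)%N.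
Proof.
elim: m => [//|m IH]; rewrite Fw_S count_cat IH count_bword; lia.
Qed.

Lemma endp_Fw m : endp (origin d) (Fw m) = cst d (m * k).
Proof. by rewrite endpE; apply/ffunP => j; rewrite !ffunE count_Fw add0r. Qed.

Definition word n nb := Fw nb ++ lin (fun _ : 'I_d => (n - nb * k)%N).

Lemma endp_word n nb : (nb * k <= n)%N -> endp (origin d) (word n nb) = diag d n.
Proof.
move=> h; rewrite endpE; apply/ffunP => j; rewrite !ffunE count_cat count_Fw count_lin add0r.
congr Posz; lia.
Qed.

Variable Q : pred (edge d).
Hypothesis hch : forall b yi, ch b = Some yi -> Q (ebox b yi).

Lemma count_Fw_ge m : (count (fun b => ch b != None) (iota 0 m) <= count Q (wedges (origin d) (Fw m)))%N.
Proof.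
elim: m => [//|m IH].
rewrite Fw_S wedges_cat count_cat -addn1 iotaD count_cat /= endp_Fw add0n addn0.
apply: leq_add => //.
case E: (ch m) => [yi|] //=.
rewrite -has_count; apply/hasP; exists (ebox m yi); first exact: box_edge_in.
exact: hch.
Qed.

End Path.

Lemma exists_min (P : nat -> Prop) : (exists n, P n) -> exists n, P n /\ forall m, P m -> (n <= m)%N.
Proof.
move=> [n Pn]; apply: contrapT => H.
suff : forall m, forall j, (j <= m)%N -> ~ P j by move/(_ n n (leqnn n)).
elim=> [|m IH] j.
  rewrite leqn0 => /eqP -> P0; apply: H; exists 0%N; split => // m' _.
move=> hj Pj; apply: H; exists j; split => // m' Pm'; rewrite leqNgt; apply/negP => lt.
by apply: (IH m') => //; rewrite -ltnS (leq_trans lt hj).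
Qed.

Lemma vsum_diag d n : vsum (diag d n) = ((d * n)%N)%:Z.
Proof.
rewrite /vsum; under eq_bigr do rewrite ffunE.
by rewrite sumr_const card_ord -mulr_natr -natz -natrM mulnC natz.
Qed.

Lemma vsum_origin d : vsum (origin d) = 0.
Proof. by rewrite /vsum; under eq_bigr do rewrite ffunE; rewrite big1. Qed.

Section Geo.
Variables (d : nat) (Omega : Type) (R : realType) (tau : edge d -> Omega -> R).
Variables (rank : seq (vtx d) -> nat) (w : Omega).
Hypothesis H01 : forall e, tau e w = 0 \/ tau e w = 1.

Lemma passage_count g :
  passage_time tau w g = (count (fun e => tau e w == 1) (edges_of g))%:R.
Proof.
rewrite /passage_time; elim: (edges_of g) => [|e s IH]; first by rewrite big_nil.
rewrite big_cons IH /=; case: (H01 e) => ->; rewrite ?eqxx /=.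
  by rewrite add0r (_ : (0 == 1 :> R) = false) ?add0n // eq_sym oner_eq0.
by rewrite natrD addrC.
Qed.

Lemma count01 (s : seq (edge d)) :
  (count (fun e => tau e w == 0%R) s + count (fun e => tau e w == 1%R) s)%N = size s.
Proof.
elim: s => [//|e s IH] /=; case: (H01 e) => ->; rewrite ?eqxx ?oner_eq0 /=.
  by rewrite eq_sym oner_eq0 -IH; lia.
by rewrite -IH; lia.
Qed.

Lemma first_geo_ex x g0 : sap (origin d) x g0 ->
  first_geodesic tau rank w x (pi_geo tau rank w x).
Proof.
move=> s0; apply: xgetPex.
have [m [[g [sg cg]] mmin]] := exists_min
  (P := fun m => exists g, sap (origin d) x g /\ count (fun e => tau e w == 1) (edges_of g) = m)
  (ex_intro _ _ (ex_intro _ g0 (conj s0 erefl))).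
have geo : geodesic tau w x g.
  split => // g' sg'; rewrite !passage_count ler_nat cg; apply: mmin; by exists g'.
have [r [[g1 [geo1 rg1]] rmin]] := exists_min
  (P := fun r => exists g, geodesic tau w x g /\ rank g = r)
  (ex_intro _ _ (ex_intro _ g (conj geo erefl))).
exists g1; split => // g' geo'; rewrite rg1; apply: rmin; by exists g'.
Qed.


Lemma det (k n nb : nat) (ch : nat -> option (Yt d k)) :
  (nb * k <= n)%N ->
  (forall b yi, ch b = Some yi -> tau (ebox b yi) w == 0) ->
  let Z := count (fun b => ch b != None) (iota 0 nb) in
  [/\ (Z <= nzero tau rank w (diag d n))%N, (d * n <= glen tau rank w (diag d n))%N &
      (glen tau rank w (diag d n) <= nzero tau rank w (diag d n) + d * n)%N].
Proof.
move=> hnb hch Z.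
set W := word ch n nb.
have sW : sap (origin d) (diag d n) (origin d :: walk (origin d) W).
  split => //; [exact: walk_path | exact: endp_word | exact: walk_uniq].
have [[sp geo] _] := first_geo_ex sW.
have := geo _ sW; rewrite !passage_count edges_walk ler_nat => le1.
have cZ := count_Fw_ge (Q := fun e => tau e w == 0) hch nb.
have szW : size W = (d * n)%N.
  have := vsum_endp (origin d) W; rewrite endp_word // vsum_diag vsum_origin add0r.
  by move=> [].
have c01W := count01 (wedges (origin d) W).
rewrite size_wedges szW in c01W.
have cW : (Z <= count (fun e => tau e w == 0%R) (wedges (origin d) W))%N.
  by rewrite /W /word wedges_cat count_cat; apply: leq_trans cZ (leq_addr _ _).
move: sp le1; rewrite /nzero /glen.
case: (pi_geo tau rank w (diag d n)) => [//|v g] [-> pg lg _] le1.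
have c01 := count01 (edges_of (origin d :: g)).
have := vsum_path pg; rewrite lg vsum_diag vsum_origin add0r lez_nat => hg.
rewrite size_edges_path // in c01 *.
split; lia.
Qed.

End Geo.
Lemma bern_ge (R : realFieldType) (p : R) (M : nat) : 0 <= p -> 1 + M%:R * p <= (1 + p) ^+ M.
Proof.
move=> p0; elim: M => [|M IH]; first by rewrite mul0r addr0 expr0.
rewrite exprS -natr1.
have h1 : 0 <= M%:R * p by apply: mulr_ge0.
have : (1 + p) * (1 + M%:R * p) <= (1 + p) * (1 + p) ^+ M.
  by apply: ler_wpM2l => //; lra.
have : 0 <= p * (M%:R * p) by apply: mulr_ge0.
nra.
Qed.

Lemma half_bound (R : realFieldType) (p : R) (M : nat) : 0 <= p <= 1 -> 1 <= p * M%:R ->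
  (1 - p) ^+ M <= 2^-1.
Proof.
move=> /andP [p0 p1] pM.
have hb := @bern_ge R p M p0.
have e1 : (1 - p) ^+ M * (1 + p) ^+ M <= 1.
  rewrite -exprMn; apply: exprn_ile1; nra.
have e0 : 0 <= (1 - p) ^+ M by apply: exprn_ge0; lra.
have : 2 <= (1 + p) ^+ M by lra.
move=> h2.
have : (1 - p) ^+ M * 2 <= 1.
  apply: le_trans e1; apply: ler_wpM2l => //.
lra.
Qed.

Lemma qpow (R : realType) (p : R) (d : nat) : 0 <= p -> (0 < d)%N -> (p `^ (d%:R)^-1) ^+ d = p.
Proof.
move=> p0 d0.
rewrite -powR_mulrn ?powR_ge0 // -powRrM mulVf ?powRr1 //.
by rewrite pnatr_eq0 -lt0n.
Qed.
Section LIA.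
Local Open Scope ereal_scope.
Lemma le_integral_any (d0 : measure_display) (T : measurableType d0) (R : realType)
  (mu : {measure set T -> \bar R}) (f1 f2 : T -> \bar R) :
  (forall x, 0 <= f1 x) -> (forall x, f1 x <= f2 x) ->
  \int[mu]_x f1 x <= \int[mu]_x f2 x.
Proof.
move=> f10 f12.
have f20 x : 0 <= f2 x by apply: le_trans (f12 x).
rewrite !ge0_integralE //.
apply: ereal_sup_le => _ [h hf <-]; exists h => //= x.
apply: le_trans (hf x) _.
rewrite /patch /=. case: ifP => _ //.
Qed.
End LIA.


Lemma mpre (d0 : measure_display) (Omega : measurableType d0) (R : realType)
  (f : Omega -> R) (B : set R) :
  measurable_fun setT f -> measurable B -> measurable (f @^-1` B).
Proof. by move=> mf mB; rewrite -[_ @^-1` _]setTI; apply: mf. Qed.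

Lemma bigcap_seq_measurable (d0 : measure_display) (Omega : measurableType d0)
  (I : eqType) (F : I -> set Omega) (s : seq I) :
  (forall i, measurable (F i)) -> measurable (\bigcap_(i in [set` s]) F i).
Proof.
move=> mF; elim: s => [|x s IH].
  rewrite (_ : \bigcap_(i in [set` [::]]) F i = setT) //.
  by apply/seteqP; split => // w _ i.
rewrite (_ : \bigcap_(i in [set` x :: s]) F i = F x `&` \bigcap_(i in [set` s]) F i).
  exact: measurableI.
apply/seteqP; split => w /=.
  move=> H; split; first by apply: H; rewrite /= inE eqxx.
  by move=> i si; apply: H; rewrite /= inE si orbT.
by move=> [Fx H] i /=; rewrite inE => /orP [/eqP ->|si] //; exact: H.
Qed.

Lemma sum_count_nat (R : realType) (T : Type) (P : pred T) (s : seq T) :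
  \sum_(b <- s) ((P b)%:R : R) = (count P s)%:R.
Proof.
elim: s => [|x s IH]; first by rewrite big_nil.
by rewrite big_cons IH /= natrD.
Qed.

Lemma sum_const_seqR (R : realType) (T : Type) (s : seq T) (c : R) :
  \sum_(b <- s) c = c *+ size s.
Proof.
elim: s => [|x s IH]; first by rewrite big_nil.
by rewrite big_cons IH /= mulrS.
Qed.

Lemma c1_ge (R : realFieldType) (x : R) : x <= 2^-1 -> 2^-1 <= 1 - x.
Proof. by move=> h; lra. Qed.

Lemma C8_lem (R : realFieldType) (C D : R) : 0 < C -> 1 <= D -> C * (8 * D) = 1 -> C * 8 <= 1.
Proof. by move=> *; nra. Qed.

Lemma claim1_real (R : realFieldType) (C nq nb c1 : R) : 0 < C -> C * 8 <= 1 -> 0 <= nq ->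
  nq <= 4 * nb -> 0 <= nb -> 2^-1 <= c1 -> C * nq <= nb * c1.
Proof.
move=> C0 C8 nq0 h nb0 c1h.
have h1 : C * nq <= C * (4 * nb) by apply: ler_wpM2l => //; exact: ltW.
have h2 : nb * 2^-1 <= nb * c1 by apply: ler_wpM2l.
have h3 : C * 8 * nb <= nb by rewrite -[X in _ <= X]mul1r; apply: ler_wpM2r.
lra.
Qed.

Lemma claim2_real (R : realFieldType) (nq nb c1 : R) :
  nq <= 4 * nb -> 0 <= nb -> 2^-1 <= c1 -> nq * 8^-1 <= nb * c1.
Proof.
move=> h nb0 c1h.
have h2 : nb * 2^-1 <= nb * c1 by apply: ler_wpM2l.
lra.
Qed.

Lemma nat_fin (Z g nz d n : nat) : (Z <= nz)%N -> (Z <= n)%N -> (g <= nz + d * n)%N ->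
  (Z * g <= nz * (d.+1 * n))%N.
Proof.
move=> h1 h2 h3.
apply: (leq_trans (leq_mul (leqnn Z) h3)).
have e : (nz * (d.+1 * n) = nz * n + nz * (d * n))%N by rewrite mulSn mulnDr.
rewrite e mulnDr; apply: leq_add.
  by rewrite mulnC leq_mul.
by rewrite leq_mul.
Qed.

Unset Implicit Arguments.

Theorem proposition2p6 (R : realType) (d : nat) (rank : seq (vtx d) -> nat) :
  (2 <= d)%N -> injective rank ->
  forall p0 : R, p0 < p_c R d ->
  exists C : R, 0 < C /\
  forall p : R, p < p0 ->
    (exists N : nat,
       forall (d0 : measure_display) (Omega : measurableType d0)
              (P : probability Omega R) (tau : edge d -> Omega -> R),
       iid_bernoulli P tau p ->
       forall n : nat, (N <= n)%N ->
       ((C * n%:R * p `^ (d%:R)^-1)%:E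
          <= \int[P]_w ((nzero tau rank w (diag d n))%:R)%:E)%E)
    /\
    (exists N' : nat,
       forall (d0 : measure_display) (Omega : measurableType d0)
              (P : probability Omega R) (tau : edge d -> Omega -> R),
       iid_bernoulli P tau p ->
       forall n : nat, (N' <= n)%N ->
       ((C * p `^ (d%:R)^-1)%:E
          <= \int[P]_w (nu0 tau rank w (diag d n))%:E)%E).
Proof.
move=> d2 _ p0 _.
have d0 : (0 < d)%N by lia.
pose C : R := ((8 * d.+1)%N%:R)^-1.
have C0 : 0 < C by rewrite invr_gt0 ltr0n.
exists C; split => // p _.
have pge0 : forall (d1 : measure_display) (Om : measurableType d1) (P : probability Om R) (tau : edge d -> Om -> R),
    iid_bernoulli P tau p -> 0 <= p /\ p <= 1.
  move=> d1 Om P tau; rewrite /iid_bernoulli => -[mt _ hp].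
  have [h0 _] := hp (origin d, Ordinal d0).
  have m0 : measurable (tau (origin d, Ordinal d0) @^-1` [set 0]).
    by apply: mpre => //; exact: measurable_set1.
  split; first by rewrite -lee_fin -h0 measure_ge0.
  by rewrite -lee_fin -h0 probability_le1.
have [pgt0|ple0] := ltP 0 p; last first.
  idtac.
  have key : forall (d1 : measure_display) (Om : measurableType d1) (P : probability Om R) (tau : edge d -> Om -> R),
      iid_bernoulli P tau p -> p `^ (d%:R)^-1 = 0.
    move=> d1 Om P tau iid; have [h1 _] := pge0 _ _ _ _ iid.
    have -> : p = 0 by apply/eqP; rewrite eq_le ple0 h1.
    by rewrite powR0 // invr_eq0 pnatr_eq0 -lt0n.
  split; exists 0%N => d1 Om P tau iid n _; rewrite (key _ _ _ _ iid) mulr0;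
    apply: integral_ge0 => w _; rewrite lee_fin //.
  by rewrite /nu0 divr_ge0.
set q := p `^ (d%:R)^-1.
have q0 : 0 < q by apply: powR_gt0.
have [N hN] : exists N : nat, 4 <= N%:R * q.
  exists (Num.trunc (4 / q)).+1; have := truncnS_gt (4 / q).
  by rewrite ltr_pdivrMr // => /ltW.
suff core : forall (d1 : measure_display) (Om : measurableType d1) (P : probability Om R) (tau : edge d -> Om -> R),
    iid_bernoulli P tau p -> forall n, (N <= n)%N ->
    ((C * n%:R * q)%:E <= \int[P]_w ((nzero tau rank w (diag d n))%:R)%:E)%E /\
    ((C * q)%:E <= \int[P]_w (nu0 tau rank w (diag d n))%:E)%E.
  by split; exists N => d1 Om P tau iid n nN; have [] := core _ _ _ _ iid n nN.
move=> d1 Om P tau iid n nN.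
have [pge p1] := pge0 _ _ _ _ iid.
move: iid; rewrite /iid_bernoulli => -[mt indep hp].
have qd : q ^+ d = p by rewrite /q qpow.
have q1 : q <= 1.
  rewrite leNgt; apply/negP => q1.
  by have := exprn_egt1 d q1; rewrite qd -lt0n d0 => /(lt_le_trans)/(_ p1); rewrite ltxx.
have kex : exists k : nat, 1 <= k%:R * q.
  by exists (Num.trunc (1 / q)).+1; have := truncnS_gt (1 / q); rewrite ltr_pdivrMr // => /ltW.
have [k [hk kmin]] := exists_min kex.
have k0 : (0 < k)%N.
  by case: k hk {kmin} => //; rewrite mul0r ler10.
have kq2 : k%:R * q <= 2.
  case: k hk kmin k0 => // k' hk kmin _.
  have : ~ (1 <= k'%:R * q) by move=> /kmin; rewrite ltnn.
  move/negP; rewrite -ltNge => h; rewrite -natr1 mulrDl mul1r; lra.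
set nb := (n %/ k)%N.
have hnb : (nb * k <= n)%N := leq_divM n k.
have nlt : (n < nb.+1 * k)%N := ltn_ceil n k0.
have nq4 : 4 <= n%:R * q.
  by apply: le_trans hN _; apply: ler_wpM2r; [exact: ltW|rewrite ler_nat].
have nbq : n%:R * q <= 4 * nb%:R.
  have : n%:R * q <= (nb.+1 * k)%N%:R * q.
    by apply: ler_wpM2r; [exact: ltW|rewrite ler_nat ltnW].
  rewrite natrM -mulrA -natr1.
  have : (nb%:R + 1) * (k%:R * q) <= (nb%:R + 1) * 2.
    by apply: ler_wpM2l => //; rewrite addr_ge0.
  lra.
pose M := #|{: Yt d k}|.
have pM : 1 <= p * M%:R.
  have h1 : 1 <= (k%:R * q) ^+ d by apply: exprn_ege1.
  rewrite exprMn qd in h1.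
  apply: le_trans h1 _; rewrite mulrC; apply: ler_wpM2l => //; rewrite -natrX ler_nat /M card_prod card_ffun !card_ord.
  by apply: leq_pmulr.
have half : (1 - p) ^+ M <= 2^-1 by apply: half_bound => //; rewrite pge p1.
pose ch w b := [pick yi : Yt d k | tau (ebox b yi) w == 0].
have hch : forall w b yi, ch w b = Some yi -> tau (ebox b yi) w == 0.
  by move=> w b yi; rewrite /ch; case: pickP => // yi' H [<-].
pose A b := [set w | ch w b != None].
pose sb b := [seq ebox b yi | yi <- enum {: Yt d k}].
pose I0 b := \bigcap_(e in [set` sb b]) (tau e @^-1` (~` [set 0])).
have mz : forall e, measurable (tau e @^-1` [set 0]).
  by move=> e; apply: mpre => //; exact: measurable_set1.
have mnz : forall e, measurable (tau e @^-1` (~` [set 0])).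
  by move=> e; apply: mpre => //; apply: measurableC; exact: measurable_set1.
have hA : forall b, A b = ~` I0 b.
  move=> b; apply/seteqP; split => w /=.
    rewrite /A /ch /=; case: pickP => // yi H _ HI.
    have : (tau (ebox b yi) @^-1` (~` [set 0])) w.
      by apply: HI; rewrite /= /sb map_f ?mem_enum.
    by rewrite /= (eqP H).
  rewrite /A /ch /= => HI; case: pickP => // H; exfalso; apply: HI => e /= /mapP [yi _ ->] /=.
  by move=> /eqP; rewrite H.
have mA : forall b, measurable (A b).
  by move=> b; rewrite hA; apply: measurableC; apply: bigcap_seq_measurable.
have PA : forall b, P (A b) = (1 - (1 - p) ^+ M)%:E.
  move=> b; rewrite hA probability_setC; last exact: bigcap_seq_measurable.
  rewrite /I0 indep //; last first.
    by move=> _; apply: measurableC; exact: measurable_set1.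
    by rewrite map_inj_uniq ?enum_uniq //; exact: ebox_inj.
  rewrite big_map.
  under eq_bigr do rewrite -preimage_setC probability_setC // (proj1 (hp _)) -EFinB.
  by rewrite prodEFin big_enum /= prodr_const EFinB.
pose bad e := tau e @^-1` (~` ([set 0] `|` [set 1])).
have mbad : forall e, measurable (bad e).
  move=> e; apply: mpre => //; apply: measurableC; apply: measurableU;
    exact: measurable_set1.
have Pbad : forall e, P (bad e) = 0%E.
  move=> e; rewrite /bad -preimage_setC probability_setC; last first.
    by apply: mpre => //; apply: measurableU; exact: measurable_set1.
  rewrite preimage_setU measureU //; last first.
  - apply/seteqP; split => w //= [-> /esym/eqP]; by rewrite oner_eq0.
  - by apply: mpre => //; exact: measurable_set1.
  apply: (@eq_trans _ _ (1 - (p%:E + (1 - p)%:E))%E).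
    by congr (_ - (_ + _))%E; [exact: (proj1 (hp e))|exact: (proj2 (hp e))].
  by rewrite -EFinD addrC subrK subrr.
pose F m := if @unpickle (edge d) m is Some e then bad e else set0.
pose N0 := \bigcup_m F m.
have mF : forall m, measurable (F m) by move=> m; rewrite /F; case: unpickle.
have mN0 : measurable N0 by apply: bigcupT_measurable.
have PN0 : P N0 = 0%E.
  apply: measure_negligible => //; apply: negligible_bigcup => m.
  exists (F m); split => //; rewrite /F; case: unpickle => // e; exact: Pbad.
have H01 : forall w, ~ N0 w -> forall e, tau e w = 0 \/ tau e w = 1.
  move=> w nw e0; apply: contrapT => H; apply: nw; exists (pickle e0) => //.
  by rewrite /F pickleK /bad /=.
pose X b := A b `\` N0.
have mX : forall b, measurable (X b) by move=> b; apply: measurableD.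
have PX : forall b, P (X b) = (1 - (1 - p) ^+ M)%:E.
  move=> b; rewrite measureD //; last first.
    by apply: (le_lt_trans (probability_le1 P (mA b))); exact: ltry.
  have h0 : P (A b `&` N0) = 0%E.
    apply/eqP; rewrite eq_le measure_ge0 andbT -PN0.
    by apply: le_measure; rewrite ?inE //; exact: measurableI.
  apply: (@eq_trans _ _ (P (A b) - 0)%E); first by congr (_ - _)%E; exact: h0.
  by rewrite sube0; exact: PA.
have indX : forall w b, (\1_(X b) w : R) = if `[< N0 w >] then 0 else (ch w b != None)%:R.
  move=> w b; rewrite indicE; case: asboolP => Nw.
    by rewrite memNset // => -[].
  case: (boolP (ch w b != None)) => h.
    by rewrite mem_set.
  by rewrite memNset // => -[] /=; rewrite /A /= (negbTE h).
have n1 : (0 < n)%N.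
  rewrite lt0n; apply/negP => /eqP n0; move: nq4; rewrite n0 mul0r => h.
  by have := lt_le_trans (ltr0n R 4) h; rewrite ltxx.
have nbn : (nb <= n)%N by apply: leq_trans hnb; rewrite leq_pmulr.
pose Z w := count (fun b => ch w b != None) (iota 0 nb).
have Zn : forall w, (Z w <= n)%N.
  by move=> w; apply: leq_trans (count_size _ _) _; rewrite size_iota.
have detw : forall w, ~ N0 w ->
  [/\ (Z w <= nzero tau rank w (diag d n))%N, (d * n <= glen tau rank w (diag d n))%N &
      (glen tau rank w (diag d n) <= nzero tau rank w (diag d n) + d * n)%N].
  by move=> w Nw; apply: (det rank (H01 w Nw) hnb); exact: hch.
have sumX : forall w, \sum_(b <- iota 0 nb) (\1_(X b) w : R) =
    if `[< N0 w >] then 0 else (Z w)%:R.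
  move=> w; under eq_bigr do rewrite indX.
  case: asboolP => _; first by rewrite big1.
  exact: sum_count_nat.
pose c1 := 1 - (1 - p) ^+ M.
have c1h : 2^-1 <= c1 by exact: c1_ge.
have mfX : forall b, measurable_fun setT (fun w => (\1_(X b) w : R)%:E).
  by move=> b; apply/measurable_realfun.measurable_EFinP; exact: measurable_realfun.measurable_indic.
have Ih : (\int[P]_w (\sum_(b <- iota 0 nb) (\1_(X b) w)%:E) = (nb%:R * c1)%:E)%E.
  have f0 : forall b w, setT w -> (0 <= (\1_(X b) w : R)%:E)%E by move=> b w _; rewrite lee_fin.
  rewrite (ge0_integral_sum _ measurableT mfX f0).
  under eq_bigr do rewrite integral_indic // setIT.
  rewrite (eq_bigr (fun _ => (1 - (1 - p) ^+ M)%:E)); last by move=> b _; exact: PX.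
  by rewrite sumEFin sum_const_seqR size_iota mulr_natl.
pose c0 : R := ((d.+1 * n)%N%:R)^-1.
have c00 : 0 < c0 by rewrite invr_gt0 ltr0n muln_gt0.
have Ih2 : (\int[P]_w (\sum_(b <- iota 0 nb) (c0%:E * (\1_(X b) w)%:E)) = (nb%:R * (c0 * c1))%:E)%E.
  have mf2 : forall b, measurable_fun setT (fun w => (c0%:E * (\1_(X b) w : R)%:E)%E).
    by move=> b; apply: measurable_funeM; exact: mfX.
  have f0 : forall b w, setT w -> (0 <= c0%:E * (\1_(X b) w : R)%:E)%E.
    by move=> b w _; rewrite -EFinM lee_fin mulr_ge0 // ltW.
  rewrite (ge0_integral_sum _ measurableT mf2 f0).
  under eq_bigr do rewrite ge0_integralZl_EFin ?(ltW c00) // ?integral_indic // ?setIT.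
  rewrite (eq_bigr (fun _ => (c0 * (1 - (1 - p) ^+ M))%:E)); last first.
    by move=> b _; rewrite EFinM; congr (_ * _)%E; exact: PX.
  by rewrite sumEFin sum_const_seqR size_iota mulr_natl.
have C8 : C * 8 <= 1.
  have h : C * (8 * (d.+1)%:R) = 1 by rewrite /C -natrM mulVf // pnatr_eq0.
  by apply: (C8_lem C0 _ h); rewrite ler1n.
split.
  apply: (@le_trans _ _ (\int[P]_w (\sum_(b <- iota 0 nb) (\1_(X b) w)%:E))%E).
    rewrite Ih lee_fin.
    have nb0 : 0 <= nb%:R :> R by [].
    have nq0 : 0 <= n%:R * q by apply: mulr_ge0; [|exact: ltW].
    by rewrite -mulrA; apply: claim1_real.
  apply: le_integral_any => w.
    by apply: sume_ge0 => b _; rewrite lee_fin.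
  rewrite sumEFin lee_fin sumX; case: asboolP => Nw //.
  by rewrite ler_nat; have [] := detw w Nw.
apply: (@le_trans _ _ (\int[P]_w (\sum_(b <- iota 0 nb) (c0%:E * (\1_(X b) w)%:E)))%E).
  rewrite Ih2 lee_fin.
  have e : C * q = c0 * (n%:R * q * 8^-1).
    rewrite /C /c0 !natrM; field.
    by rewrite pnatr_eq0 -lt0n n1 (_ : 1 + d%:R = d.+1%:R :> R) ?pnatr_eq0 // -natr1 addrC.
  rewrite e [in X in _ <= X]mulrCA; apply: ler_wpM2l; first exact: ltW.
  exact: claim2_real.
apply: le_integral_any => w.
  by apply: sume_ge0 => b _; rewrite -EFinM lee_fin mulr_ge0 // ltW.
rewrite (eq_bigr (fun b => (c0 * \1_(X b) w)%:E)) //.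
rewrite sumEFin lee_fin -mulr_sumr sumX; case: asboolP => Nw.
  by rewrite mulr0 /nu0 divr_ge0.
have [hZ hg1 hg2] := detw w Nw.
have g0 : (0 < glen tau rank w (diag d n))%N.
  by apply: leq_trans hg1; rewrite muln_gt0 d0.
rewrite /nu0 /c0 mulrC ler_pdivrMr ?ltr0n //.
rewrite -mulrA [_^-1 * _]mulrC mulrA ler_pdivlMr ?ltr0n //.
rewrite -!natrM ler_nat.
exact: nat_fin (Zn w) hg2.
by rewrite muln_gt0 n1.
Qed.
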